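(* Consider the $(\mu+1)$ EA with clearing (any population size $\mu$, clearing radius, niche capacity and distance function) on any fitness function on $\{0,1\}^n$. The probability that, starting from a search point $x^*$, within $\mu n/16$ generations the algorithm evolves a lineage that reaches Hamming distance at least $n/2$ to its founder $x^*$ is $2^{-\Omega(n)}$.
   Context: A lineage starting from $x^*$ is a sequence $x^*=z_0,z_1,\dots,z_k$ of individuals where each $z_{i+1}$ is created as the offspring of parent $z_i$ in some generation; it reaches Hamming distance at least $n/2$ if some $z_i$ has Hamming distance at least $n/2$ to $x^*$. The $(\mu+1)$ EA with clearing (population size $\mu$, clearing radius $\sigma$, niche capacity $\kappa$, distance function $\mathrm{d}$), for a fitness function with positive values: in generation $t$, choose a parent $x\in P_t$ uniformly at random; create $y$ by flipping each bit of $x$ independently with probability $1/n$; let $P_t^*=P_t\cup\{y\}$; update the fitness values of $P_t^*$ by the clearing procedure: sort $P_t^*$ by decreasing fitness; for $i=1,\dots,|P_t^*|$, if the current fitness of $P[i]$ is positive, set $w:=1$ and for $j=i+1,\dots,|P_t^*|$: if the current fitness of $P[j]$ is positive and $\mathrm{d}(P[i],P[j])<\sigma$ then, if $w<\kappa$ set $w:=w+1$, else set the fitness of $P[j]$ to $0$. Then choose $z\in P_t$ with worst (cleared) fitness uniformly at random; if the (cleared) fitness of $y$ is at least that of $z$, set $P_{t+1}=P_t^*\setminus\{z\}$, otherwise $P_{t+1}=P_t^*\setminus\{y\}$. *)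

(* Defs.v *)
From HB Require Import structures.
From mathcomp Require Import all_boot all_order all_algebra.
From mathcomp Require Import reals exp.
Set Implicit Arguments. Unset Strict Implicit. Unset Printing Implicit Defensive.
Import Order.TTheory GRing.Theory Num.Theory.
Local Open Scope ring_scope.

Section MuPlusOneClearing.
Variables (R : realType) (n mu : nat).

Definition bits := n.-tuple bool.

Definition ham (x y : bits) : nat := (\sum_(i < n) (tnth x i != tnth y i))%N.

Definition mutprob (x y : bits) : R :=
  (n%:R^-1) ^+ ham x y * (1 - n%:R^-1) ^+ (n - ham x y).

(* An individual is a search point together with a flag recording whether
   it belongs to a lineage starting from the founder individual. *)
Definition indiv := (bits * bool)%type.
Definition pop := mu.-tuple indiv.

(* Extended population P_t^* = P_t ∪ {y}; index ord_max is the offspring y. *)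
Definition extpop (P : pop) (y : indiv) : mu.+1.-tuple indiv :=
  [tuple if (k < mu)%N then nth y P k else y | k < mu.+1].

Variables (f : bits -> R) (d : bits -> bits -> R) (sigma : R) (kappa : nat).

Definition idx := 'I_mu.+1.
Definition upd (cur : idx -> R) (j : idx) : idx -> R :=
  fun k => if k == j then 0 else cur k.

Fixpoint clear_inner (g : idx -> bits) (i : idx) (rest : seq idx) (w : nat)
  (cur : idx -> R) : idx -> R :=
  match rest with
  | [::] => cur
  | j :: r =>
      if (0 < cur j) && (d (g i) (g j) < sigma) then
        if (w < kappa)%N then clear_inner g i r w.+1 cur
        else clear_inner g i r w (upd cur j)
      else clear_inner g i r w cur
  end.

Fixpoint clear_outer (g : idx -> bits) (s : seq idx) (cur : idx -> R)
  : idx -> R :=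
  match s with
  | [::] => cur
  | i :: r =>
      clear_outer g r (if 0 < cur i then clear_inner g i r 1 cur else cur)
  end.

Definition cleared (Q : mu.+1.-tuple bits) (s : seq idx) : idx -> R :=
  clear_outer (fun k => tnth Q k) s (fun k => f (tnth Q k)).

Definition valid_sort (tb : mu.+1.-tuple bits -> seq idx) : Prop :=
  forall Q, perm_eq (tb Q) (enum 'I_mu.+1) /\
            sorted (fun i j => f (tnth Q j) <= f (tnth Q i)) (tb Q).

Variable tb : mu.+1.-tuple bits -> seq idx.

Definition cfit (Ps : mu.+1.-tuple indiv) : idx -> R :=
  let Q := [tuple (tnth Ps k).1 | k < mu.+1] in cleared Q (tb Q).

Definition worst (Ps : mu.+1.-tuple indiv) : {set 'I_mu} :=
  [set z : 'I_mu | [forall z' : 'I_mu,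
     cfit Ps (widen_ord (leqnSn mu) z) <= cfit Ps (widen_ord (leqnSn mu) z')]].

Definition next_pop (P : pop) (y : indiv) (z : 'I_mu) : pop :=
  let Ps := extpop P y in
  if cfit Ps (widen_ord (leqnSn mu) z) <= cfit Ps ord_max then
    [tuple if k == z then y else tnth P k | k < mu]
  else P.

Variable xs : bits.

Definition far (x : bits) : bool := (n <= 2 * ham x xs)%N.

(* An offspring counts as soon as it is created, even if it is discarded. *)
Fixpoint reach (T : nat) (P : pop) : R :=
  if [exists k : 'I_mu, (tnth P k).2 && far (tnth P k).1] then 1 else
  match T with
  | 0 => 0
  | T'.+1 =>
      \sum_(i < mu) mu%:R^-1 *
        \sum_(y : bits) mutprob (tnth P i).1 y *
          (if (tnth P i).2 && far y then 1 else
           let yi := (y, (tnth P i).2) in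
           let W := worst (extpop P yi) in
           \sum_(z in W) #|W|%:R^-1 * reach T' (next_pop P yi z))
  end.

End MuPlusOneClearing.

Definition init_pop (n mu : nat) (P0 : mu.-tuple (bits n)) (i0 : 'I_mu)
  : pop n mu := [tuple (tnth P0 k, k == i0) | k < mu].

(* Main.v *)
Require Import Defs.
From HB Require Import structures.
From mathcomp Require Import all_boot all_order all_algebra.
From mathcomp Require Import reals exp.
From mathcomp Require Import sequences.
From mathcomp Require Import zify ring lra.
Import Order.TTheory GRing.Theory Num.Theory.
Local Open Scope ring_scope.

Lemma sum_tuple_prod (R : comNzRingType) n (F : 'I_n -> bool -> R) :
  \sum_(y : n.-tuple bool) \prod_(i < n) F i (tnth y i)
  = \prod_(i < n) (F i false + F i true).
Proof.
have -> : \prod_(i < n) (F i false + F i true) = \prod_(i < n) \sum_(b : bool) F i b.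
  by apply: eq_bigr => i _; rewrite big_bool addrC.
rewrite bigA_distr_bigA /=.
rewrite (reindex (fun g : {ffun 'I_n -> bool} => [tuple g i | i < n])) /=.
  under eq_bigr do under eq_bigr do rewrite tnth_mktuple. by [].
exists (fun t : n.-tuple bool => [ffun i => tnth t i]) => [g _|t _].
  by apply/ffunP => i; rewrite ffunE tnth_mktuple.
by apply: eq_from_tnth => i; rewrite tnth_mktuple ffunE.
Qed.

Lemma prod_if (R : comNzRingType) n (c : 'I_n -> bool) (A B : R) :
  \prod_(i < n) (if c i then A else B) = A ^+ (\sum_(i < n) c i)%N * B ^+ (n - \sum_(i < n) c i)%N.
Proof.
rewrite (bigID c) /=.
have -> : \prod_(i < n | c i) (if c i then A else B) = \prod_(i < n | c i) A.
  by apply: eq_bigr => i ->.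
have -> : \prod_(i < n | ~~ c i) (if c i then A else B) = \prod_(i < n | ~~ c i) B.
  by apply: eq_bigr => i Hi; rewrite (negbTE Hi).
rewrite !prodr_const.
have Hs : (\sum_(i < n) c i)%N = #|c|.
  rewrite -sum1_card [RHS]big_mkcond /=; by apply: eq_bigr => i _; rewrite unfold_in; case: (c i).
rewrite Hs; congr (_ * _ ^+ _).
by rewrite -[X in (X - _)%N](card_ord n) -(cardC c) addKn.
Qed.

Lemma mut_sum (R : realType) n (x : bits n) (b : R) :
  \sum_(y : bits n) mutprob R x y * b ^+ ham x y
  = (1 - n%:R^-1 + n%:R^-1 * b) ^+ n.
Proof.
pose F := fun (i : 'I_n) (yb : bool) =>
  if tnth x i != yb then n%:R^-1 * b else 1 - n%:R^-1 : R.
have E : forall y : bits n, mutprob R x y * b ^+ ham x y = \prod_(i < n) F i (tnth y i).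
  move=> y; rewrite /F prod_if /mutprob /ham exprMn.
  by rewrite -!mulrA [X in _ * X]mulrC.
rewrite (eq_bigr _ (fun y _ => E y)) sum_tuple_prod.
rewrite (eq_bigr (fun=> 1 - n%:R^-1 + n%:R^-1 * b)) ?prodr_const ?card_ord //.
by move=> i _; rewrite /F; case: (tnth x i) => /=; rewrite addrC.
Qed.

Lemma ham_tri n (x y z : bits n) : (ham y z <= ham x z + ham x y)%N.
Proof.
rewrite /ham -big_split /=; apply: leq_sum => i _.
by case: (tnth x i); case: (tnth y i); case: (tnth z i).
Qed.

Section Main.
Variables (R : realType) (n mu : nat) (f : bits n -> R) (d : bits n -> bits n -> R)
  (sigma : R) (kappa : nat) (tb : mu.+1.-tuple (bits n) -> seq 'I_mu.+1) (xs : bits n).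

Definition tm (a : indiv n) : R := if a.2 then 2 ^+ ham a.1 xs else 0.
Definition Gp (P : pop n mu) : R := \sum_(k < mu) tm (tnth P k).
Definition Kc : R := (1 + n%:R^-1) ^+ n.
Definition cc : R := 1 + Kc / mu%:R.
Definition sc : R := (2 ^+ n./2)^-1.

Lemma tm_ge0 a : 0 <= tm a.
Proof. by rewrite /tm; case: ifP => // _; rewrite exprn_ge0. Qed.

Lemma Gp_ge0 P : 0 <= Gp P.
Proof. by apply: sumr_ge0 => k _; apply: tm_ge0. Qed.

Lemma Kc_ge0 : 0 <= Kc.
Proof. by rewrite /Kc exprn_ge0 // addr_ge0 // invr_ge0. Qed.

Lemma cc_ge1 : 1 <= cc.
Proof. by rewrite /cc lerDl divr_ge0 // Kc_ge0. Qed.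

Lemma sc_ge0 : 0 <= sc.
Proof. by rewrite /sc invr_ge0 exprn_ge0. Qed.

Lemma far_ge (x : bits n) : far xs x -> 1 <= 2 ^+ ham x xs * sc.
Proof.
rewrite /far /sc => H.
have H2 : (n./2 <= ham x xs)%N by lia.
rewrite -(subnK H2) exprD -mulrA mulfV ?mulr1 ?exprn_ege1 //.
  by rewrite ler1n.
by apply: expf_neq0; rewrite pnatr_eq0.
Qed.

Lemma reach0 P : reach f d sigma kappa tb xs 0 P =
  if [exists k : 'I_mu, (tnth P k).2 && far xs (tnth P k).1] then 1 else 0.
Proof. by []. Qed.

Lemma reachS T P : reach f d sigma kappa tb xs T.+1 P =
  if [exists k : 'I_mu, (tnth P k).2 && far xs (tnth P k).1] then 1 else
      \sum_(i < mu) mu%:R^-1 *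
        \sum_(y : bits n) mutprob R (tnth P i).1 y *
          (if (tnth P i).2 && far xs y then 1 else
           let yi := (y, (tnth P i).2) in
           let W := worst f d sigma kappa tb (extpop P yi) in
           \sum_(z in W) #|W|%:R^-1 * reach f d sigma kappa tb xs T (next_pop f d sigma kappa tb P yi z)).
Proof. by []. Qed.

Lemma exists_far P T : [exists k : 'I_mu, (tnth P k).2 && far xs (tnth P k).1] ->
  1 <= Gp P * cc ^+ T * sc.
Proof.
case/existsP => k /andP [Hf Hfar].
apply: le_trans (far_ge _ Hfar) _.
apply: ler_wpM2r; first exact: sc_ge0.
apply: (@le_trans _ _ (Gp P)).
  rewrite /Gp (bigD1 k) //= {1}/tm Hf lerDl.
  by apply: sumr_ge0 => j _; apply: tm_ge0.
by rewrite ler_peMr ?Gp_ge0 // exprn_ege1 // cc_ge1.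
Qed.

Lemma Gp_next P y z : Gp (next_pop f d sigma kappa tb P y z) <= Gp P + tm y.
Proof.
rewrite /next_pop; case: ifP => _; last by rewrite lerDl tm_ge0.
rewrite /Gp (bigD1 z) //= [X in _ <= X + _](bigD1 z) //= tnth_mktuple eqxx.
have -> : \sum_(i < mu | i != z) tm (tnth [tuple (if k == z then y else tnth P k) | k < mu] i)
   = \sum_(i < mu | i != z) tm (tnth P i).
  by apply: eq_bigr => i /negbTE Hi; rewrite tnth_mktuple Hi.
rewrite [X in X <= _]addrC lerD2r lerDr.
exact: tm_ge0.
Qed.


Lemma inv_le1 : n%:R^-1 <= 1 :> R.
Proof. by case: n => [|m]; rewrite ?invr0 // invf_le1 // ?ler1n // ltr0Sn. Qed.

Lemma mut_ge0 (x y : bits n) : 0 <= mutprob R x y.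
Proof.
rewrite /mutprob mulr_ge0 // exprn_ge0 //; first by rewrite invr_ge0.
by rewrite subr_ge0 inv_le1.
Qed.

Lemma mut_sum1 (x : bits n) : \sum_(y : bits n) mutprob R x y = 1.
Proof.
have := mut_sum R n x 1; rewrite mulr1 subrK expr1n => <-.
by apply: eq_bigr => y _; rewrite expr1n mulr1.
Qed.

Lemma mut_tm (x : bits n) fl : \sum_(y : bits n) mutprob R x y * tm (y, fl) <= tm (x, fl) * Kc.
Proof.
rewrite /tm /=; case: fl; last by rewrite mul0r big1 // => y _; rewrite mulr0.
apply: (@le_trans _ _ (\sum_(y : bits n) 2 ^+ ham x xs * (mutprob R x y * 2 ^+ ham x y))).
  apply: ler_sum => y _; rewrite mulrCA; apply: ler_wpM2l; first exact: mut_ge0.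
  by rewrite -exprD ler_eXn2l ?ltr1n // ham_tri.
rewrite -mulr_sumr mut_sum; apply: ler_wpM2l; first by rewrite exprn_ge0.
have -> : 1 - n%:R^-1 + n%:R^-1 * 2 = 1 + n%:R^-1 :> R by ring.
by rewrite /Kc.
Qed.

Lemma avg_le (W : {set 'I_mu}) (g : 'I_mu -> R) B : 0 <= B -> (forall z, g z <= B) ->
  \sum_(z in W) #|W|%:R^-1 * g z <= B.
Proof.
move=> B0 Hg.
apply: (@le_trans _ _ (\sum_(z in W) #|W|%:R^-1 * B)).
  apply: ler_sum => z _; apply: ler_wpM2l; [by rewrite invr_ge0 | exact: Hg].
rewrite sumr_const.
case: (posnP #|W|) => [->|Hp]; first by rewrite mulr0n.
rewrite -[_ *+ #|W|]mulr_natr mulrAC mulVf ?mul1r //.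
by rewrite pnatr_eq0 -lt0n.
Qed.

Lemma main_bound T P : (0 < mu)%N ->
  reach f d sigma kappa tb xs T P <= Gp P * cc ^+ T * sc.
Proof.
move=> mu0; elim: T P => [|T IH] P.
  rewrite reach0; case: ifP => H; first exact: exists_far.
  by rewrite mulr_ge0 ?sc_ge0 // mulr_ge0 ?Gp_ge0 // expr0.
rewrite reachS; case: ifP => H; first exact: exists_far.
have C0 : 0 <= cc ^+ T * sc by rewrite mulr_ge0 ?sc_ge0 // exprn_ge0 // (le_trans ler01 cc_ge1).
apply: (@le_trans _ _ (\sum_(i < mu) mu%:R^-1 * ((Gp P + tm (tnth P i) * Kc) * (cc ^+ T * sc)))).
  apply: ler_sum => i _; apply: ler_wpM2l; first by rewrite invr_ge0.
  apply: (@le_trans _ _ (\sum_(y : bits n) mutprob R (tnth P i).1 y *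
      ((Gp P + tm (y, (tnth P i).2)) * (cc ^+ T * sc)))).
    apply: ler_sum => y _; apply: ler_wpM2l; first exact: mut_ge0.
    case: ifP => Hc.
      case/andP: Hc => Hfl Hfar.
      apply: (le_trans (far_ge _ Hfar)).
      rewrite mulrA; apply: ler_wpM2r; first exact: sc_ge0.
      rewrite /tm /= Hfl; apply: (@le_trans _ _ (Gp P + 2 ^+ ham y xs)).
        by rewrite lerDr Gp_ge0.
      rewrite ler_peMr ?exprn_ege1 ?cc_ge1 //.
      by rewrite addr_ge0 ?Gp_ge0 ?exprn_ge0.
    rewrite /=; apply: avg_le.
      by rewrite mulr_ge0 // addr_ge0 ?Gp_ge0 ?tm_ge0.
    move=> z; apply: (le_trans (IH _)).
    rewrite -mulrA; apply: ler_wpM2r => //.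
    exact: Gp_next.
  have -> : \sum_(y : bits n) mutprob R (tnth P i).1 y *
      ((Gp P + tm (y, (tnth P i).2)) * (cc ^+ T * sc))
    = (Gp P * \sum_(y : bits n) mutprob R (tnth P i).1 y
       + \sum_(y : bits n) mutprob R (tnth P i).1 y * tm (y, (tnth P i).2)) * (cc ^+ T * sc).
    rewrite mulr_sumr -big_split big_distrl /=; apply: eq_bigr => y _; ring.
  apply: ler_wpM2r => //; rewrite mut_sum1 mulr1 lerD2l.
  by case: (tnth P i) => x fl; apply: mut_tm.
rewrite -mulr_sumr -big_distrl big_split /= sumr_const card_ord -big_distrl /=.
rewrite -/(Gp P) /cc exprS.
have mu0' : mu%:R != 0 :> R by rewrite pnatr_eq0 -lt0n.
rewrite -[Gp P *+ mu]mulr_natr le_eqVlt; apply/orP; left; apply/eqP.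
by field.
Qed.

End Main.

Lemma expR_inv_le (R : realType) (x : R) : expR x * (1 - x) <= 1.
Proof.
apply: (le_trans (ler_wpM2l (expR_ge0 x) (expR_ge1Dx (-x)))).
by rewrite expRxMexpNx_1.
Qed.

Lemma expR1_le3 (R : realType) : expR (1 : R) <= 3.
Proof.
have E : expR (1 : R) = expR (6^-1) ^+ 6.
  by rewrite -expRM_natr mulVf // pnatr_eq0.
have H := expR_inv_le R (6^-1).
have H1 : expR (6^-1 : R) <= 6 / 5.
  have H0 : 0 < expR (6^-1 : R) := expR_gt0 _.
  move: H; set e := expR _; lra.
rewrite E; apply: (le_trans (lerXn2r 6 _ _ H1)); rewrite ?nnegrE ?expR_ge0 //.
by lra.
rewrite !exprS expr0; lra.
Qed.

Lemma expR3_le64 (R : realType) : expR (3 : R) <= 64.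
Proof.
have E : expR (3 : R) = expR (2^-1) ^+ 6.
  by rewrite -expRM_natr; congr expR; field.
have H := expR_inv_le R (2^-1).
have H1 : expR (2^-1 : R) <= 2.
  have H0 : 0 < expR (2^-1 : R) := expR_gt0 _.
  move: H; set e := expR _; lra.
rewrite E; apply: (le_trans (lerXn2r 6 _ _ H1)); rewrite ?nnegrE ?expR_ge0 //.
  by lra.
Qed.

Lemma final_bound (R : realType) n mu T : (0 < mu)%N -> (8 <= n)%N -> (T * 16 <= mu * n)%N ->
  cc R n mu ^+ T * sc R n <= 2 `^ (-(1/16 * n%:R)).
Proof.
move=> mu0 n8 HT.
have n0 : n%:R != 0 :> R by rewrite pnatr_eq0; apply/eqP; lia.
have m0 : mu%:R != 0 :> R by rewrite pnatr_eq0 -lt0n.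
have Kc3 : Kc R n <= 3.
  apply: (le_trans _ (expR1_le3 R)).
  have -> : (1:R) = n%:R^-1 * n%:R by rewrite mulVf.
  rewrite expRM_natr /Kc; apply: lerXn2r; rewrite ?nnegrE ?addr_ge0 ?invr_ge0 ?expR_ge0 //.
  exact: expR_ge1Dx.
have cmu : cc R n mu ^+ mu <= 64.
  apply: (le_trans _ (expR3_le64 R)).
  apply: (@le_trans _ _ (expR (Kc R n))); last by rewrite ler_expR.
  have -> : expR (Kc R n) = expR (Kc R n / mu%:R) ^+ mu by rewrite -expRM_natr mulfVK.
  apply: lerXn2r; rewrite ?nnegrE ?expR_ge0 //.
    by apply: (le_trans ler01); apply: cc_ge1.
  exact: expR_ge1Dx.
have c1 := cc_ge1 R n mu.
have c0 : 0 <= cc R n mu := le_trans ler01 c1.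
have Y : 2 `^ (-(1/16 * n%:R)) ^+ 16 = (2 ^+ n)^-1 :> R.
  rewrite -powR_mulrn ?powR_ge0 // -powRrM.
  have -> : -(1/16 * n%:R) * 16%:R = - (n%:R) :> R by field.
  by rewrite powR_invn.
rewrite -(ler_pXn2r (n:=16)) ?nnegrE ?powR_ge0 ?mulr_ge0 ?exprn_ge0 ?sc_ge0 // Y.
rewrite exprMn -exprM /sc exprVn -exprM.
have h1 : cc R n mu ^+ (T * 16) <= 2 ^+ (6 * n).
  apply: (le_trans (ler_weXn2l c1 HT)).
  rewrite exprM exprM; apply: lerXn2r; rewrite ?nnegrE ?exprn_ge0 //.
  by rewrite [X in _ <= X](_ : _ = 64) //; lra.
have h2 : 2 ^+ (7 * n) <= 2 ^+ (n./2 * 16) :> R.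
  by apply: ler_weXn2l; [rewrite ler1n | lia].
rewrite ler_pdivrMr ?exprn_gt0 //.
apply: (le_trans h1).
have -> : (2 ^+ (6 * n) : R) = (2 ^+ n)^-1 * 2 ^+ (7 * n).
  have E7 : (7 * n = n + 6 * n)%N by lia.
  by rewrite E7 exprD mulKf // expf_neq0 // pnatr_eq0.
by apply: ler_wpM2l; rewrite ?invr_ge0 ?exprn_ge0.
Qed.

Lemma Gp_init (R : realType) n mu (P0 : mu.-tuple (bits n)) (i0 : 'I_mu) :
  Gp R n mu (tnth P0 i0) (init_pop P0 i0) = 1.
Proof.
rewrite /Gp (bigD1 i0) //= big1 ?addr0.
  rewrite /tm tnth_mktuple /= eqxx /=.
  have -> : ham (tnth P0 i0) (tnth P0 i0) = 0%N by rewrite /ham big1 // => i _; rewrite eqxx.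
  by rewrite expr0.
by move=> k /negbTE Hk; rewrite /tm tnth_mktuple /= Hk.
Qed.

Theorem corollary3 (R : realType) :
  exists (c : R) (n0 : nat), 0 < c /\
  forall (n mu : nat) (f : bits n -> R) (d : bits n -> bits n -> R)
         (sigma : R) (kappa : nat) (tb : mu.+1.-tuple (bits n) -> seq 'I_mu.+1)
         (P0 : mu.-tuple (bits n)) (i0 : 'I_mu),
    (n0 <= n)%N ->
    (forall x, 0 < f x) ->
    valid_sort f tb ->
    reach f d sigma kappa tb (tnth P0 i0) ((mu * n) %/ 16) (init_pop P0 i0)
      <= 2 `^ (- (c * n%:R)).
Proof.
exists (1/16), 8%N; split; first by lra.
move=> n mu f d sigma kappa tb P0 i0 Hn _ _.
have mu0 : (0 < mu)%N := leq_ltn_trans (leq0n _) (ltn_ord i0).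
apply: (le_trans (main_bound _ _ _ _ _ _ _ _ _ _ _ mu0)).
rewrite Gp_init mul1r; apply: final_bound => //.
exact: leq_divM.
Qed.
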